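(* The set function $f:2^{[n-1]}\to\mathbb R$ is non-negative, non-decreasing and submodular.
   Context: Independent instance: each action $i\in[n]$ has a type drawn independently over types $j\in[m]$, type $j$ having probability $q_{ij}$, receiver value $\rho_{ij}$ and sender value $\xi_{ij}$. $\rho_E=\max_i\sum_jq_{ij}\rho_{ij}$. For $z\in[0,1]$, $g_i(z)=\max\{\sum_{j=1}^mx_{ij}\xi_{ij}:\sum_jx_{ij}\le z,\ \sum_jx_{ij}\rho_{ij}\ge\rho_E\sum_jx_{ij},\ x_{ij}\in[0,q_{ij}]\ \forall j\}$. For $S\subseteq[n-1]$, $f(S)=\max\{\sum_{i\in S\cup\{n\}}g_i(z_i):\sum_{i\in S\cup\{n\}}z_i\le1,\ z_i\ge0\ \forall i\in S\cup\{n\}\}$. *)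

(* Defs.v *)
From HB Require Import structures.
From mathcomp Require Import all_boot all_order all_algebra.
From mathcomp Require Import all_classical all_reals.
Set Implicit Arguments. Unset Strict Implicit. Unset Printing Implicit Defensive.
Import Order.TTheory GRing.Theory Num.Theory.
Local Open Scope ring_scope.
Local Open Scope classical_set_scope.

Section Defs.
Variables (R : realType) (n m : nat).
(* actions are 'I_n (action k+1 of the paper is ordinal k); types are 'I_m *)
Variables (q rho xi : 'I_n -> 'I_m -> R).

Definition rhoE : R :=
  sup [set r | exists i : 'I_n, r = \sum_(j < m) q i j * rho i j].

Definition gfun (i : 'I_n) (z : R) : R :=
  sup [set v | exists x : 'I_m -> R,
        [/\ \sum_(j < m) x j <= z,
            \sum_(j < m) x j * rho i j >= rhoE * \sum_(j < m) x j,
            (forall j, 0 <= x j /\ x j <= q i j) &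
            v = \sum_(j < m) x j * xi i j]].

(* the action n of the paper is the ordinal with value n.-1 *)
Definition is_last (i : 'I_n) : bool := val i == n.-1.

(* S ⊆ [n-1] : S does not contain the last action *)
Definition in_dom (S : {set 'I_n}) : Prop := forall i, i \in S -> ~~ is_last i.

Definition withlast (S : {set 'I_n}) : {set 'I_n} := S :|: [set i | is_last i].

Definition ffun_set (S : {set 'I_n}) : R :=
  sup [set v | exists z : 'I_n -> R,
        [/\ \sum_(i in withlast S) z i <= 1,
            (forall i, i \in withlast S -> 0 <= z i) &
            v = \sum_(i in withlast S) gfun i (z i)]].
End Defs.

(* Main.v *)
Require Import Defs.
From HB Require Import structures.
From mathcomp Require Import all_boot all_order all_algebra.
From mathcomp Require Import all_classical all_reals.
From mathcomp Require Import lra.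
Import Order.TTheory GRing.Theory Num.Theory.
Local Open Scope ring_scope.

Lemma sup2_le (R : realType) (E1 E2 : set R) (a b c : R) :
  0 <= a -> 0 <= b -> has_sup E1 -> has_sup E2 ->
  (forall x y, E1 x -> E2 y -> a * x + b * y <= c) ->
  a * sup E1 + b * sup E2 <= c.
Proof.
move=> a0 b0 h1 h2 H; apply/ler_addgt0Pr => e e0.
have e'0 : 0 < e / (a + b + 1) by apply: divr_gt0 => //; lra.
have [x Ex hx] := sup_adherent e'0 h1.
have [y Ey hy] := sup_adherent e'0 h2.
have := H _ _ Ex Ey.
set e' := e / (a + b + 1) in e'0 hx hy *.
have he : (a + b + 1) * e' = e by rewrite /e' mulrC divfK //; lra.
have h3 : a * sup E1 <= a * x + a * e'.
  by rewrite -mulrDr ler_wpM2l //; lra.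
have h4 : b * sup E2 <= b * y + b * e'.
  by rewrite -mulrDr ler_wpM2l //; lra.
nra.
Qed.


Section G.
Variables (R : realType) (n m : nat) (q rho xi : 'I_n -> 'I_m -> R).
Hypothesis hq : forall i j, 0 <= q i j.

Definition gset (i : 'I_n) (z : R) : set R :=
  [set v | exists x : 'I_m -> R,
        [/\ \sum_(j < m) x j <= z,
            \sum_(j < m) x j * rho i j >= rhoE q rho * \sum_(j < m) x j,
            (forall j, 0 <= x j /\ x j <= q i j) &
            v = \sum_(j < m) x j * xi i j]].

Lemma gfunE i z : gfun q rho xi i z = sup (gset i z).
Proof. by []. Qed.

Definition Bd i := \sum_(j < m) q i j * `|xi i j|.

Lemma gset_ub i z v : gset i z v -> v <= Bd i.
Proof.
case=> x [_ _ hx ->]; apply: ler_sum => j _.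
have [x0 xq] := hx j.
apply: (le_trans (ler_norm _)); rewrite normrM (ger0_norm x0).
by rewrite ler_wpM2r.
Qed.

Lemma gset0 i z : 0 <= z -> gset i z 0.
Proof.
move=> z0; exists (fun _ => 0); split.
- by rewrite big1.
- by rewrite !big1 ?mulr0 // => j _; rewrite mul0r.
- by move=> j; split.
- by rewrite big1 // => j _; rewrite mul0r.
Qed.

Lemma gset_sup i z : 0 <= z -> has_sup (gset i z).
Proof.
move=> z0; split; first by exists 0; exact: gset0.
by exists (Bd i) => v /gset_ub.
Qed.

Lemma gfun_ge0 i z : 0 <= z -> 0 <= gfun q rho xi i z.
Proof.
by move=> z0; rewrite gfunE; move: (sup_upper_bound (gset_sup i z z0)) => /ubP; apply; exact: gset0.
Qed.

Lemma gfun_le i z : 0 <= z -> gfun q rho xi i z <= Bd i.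
Proof.
move=> z0; rewrite gfunE; apply: ge_sup; first by exists 0; exact: gset0.
by move=> v /gset_ub.
Qed.

Lemma gfun_concave i z w t : 0 <= z -> 0 <= w -> 0 <= t <= 1 ->
  (1 - t) * gfun q rho xi i z + t * gfun q rho xi i w <=
  gfun q rho xi i ((1 - t) * z + t * w).
Proof.
move=> z0 w0 /andP[t0 t1].
have c0 : 0 <= (1 - t) * z + t * w by apply: addr_ge0; apply: mulr_ge0 => //; lra.
rewrite !gfunE; apply: sup2_le; rewrite ?subr_ge0 //; try exact: gset_sup.
move=> a b [x [x1 x2 x3 ->]] [y [y1 y2 y3 ->]].
move: (sup_upper_bound (gset_sup i _ c0)) => /ubP; apply.
exists (fun j => (1 - t) * x j + t * y j); split.
- rewrite big_split /= -!mulr_sumr.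
  by apply: lerD; apply: ler_wpM2l => //; lra.
- rewrite big_split /= -!mulr_sumr.
  under eq_bigr do rewrite mulrDl -!mulrA.
  rewrite big_split /= -!mulr_sumr mulrDr (mulrCA _ (1 - t)) (mulrCA _ t).
  by apply: lerD; apply: ler_wpM2l => //; lra.
- move=> j; have [xa xb] := x3 j; have [ya yb] := y3 j; split.
    by apply: addr_ge0; apply: mulr_ge0 => //; lra.
  have -> : q i j = (1 - t) * q i j + t * q i j by rewrite mulrBl mul1r subrK.
  by apply: lerD; apply: ler_wpM2l => //; lra.
- rewrite !mulr_sumr -big_split /=; apply: eq_bigr => j _.
  by rewrite [RHS]mulrDl -!mulrA.
Qed.
End G.


Section F.
Variables (R : realType) (n m : nat) (q rho xi : 'I_n -> 'I_m -> R).
Hypothesis hq : forall i j, 0 <= q i j.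
Local Notation g := (gfun q rho xi).

Definition valf (A : {set 'I_n}) (z : 'I_n -> R) := \sum_(i in A) g i (z i).
Definition feas (A : {set 'I_n}) (z : 'I_n -> R) :=
  \sum_(i in A) z i <= 1 /\ (forall i, i \in A -> 0 <= z i).

Lemma exchange (A B : {set 'I_n}) (z w : 'I_n -> R) (t : R) : 0 <= t <= 1 ->
  feas (A :|: B) z -> feas (A :&: B) w ->
  valf (A :|: B) z + valf (A :&: B) w <=
  valf A (fun i => if i \in A :&: B then (1 - t) * z i + t * w i else z i) +
  valf B (fun i => if i \in A :&: B then (1 - (1 - t)) * z i + (1 - t) * w i
                  else z i).
Proof.
move=> /andP[t0 t1] [_ hz] [_ hw].
rewrite /valf !(big_mkcond (fun i => i \in _)) -!big_split /=.
apply: ler_sum => i _.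
have := hz i; have := hw i; rewrite !inE.
case: (i \in A); case: (i \in B) => //= hw' hz'.
- rewrite addrC.
  have e1 : 0 <= t <= 1 by apply/andP.
  have e2 : 0 <= 1 - t <= 1 by apply/andP; split; lra.
  have c1 := @gfun_concave R n m q rho xi hq i _ _ _ (hz' isT) (hw' isT) e1.
  have c2 := @gfun_concave R n m q rho xi hq i _ _ _ (hz' isT) (hw' isT) e2.
  move: c1 c2; set G1 := g i _; set G2 := g i _; lra.
all: by rewrite ?addr0 ?add0r.
Qed.

Lemma sumA_t (A B : {set 'I_n}) (z w : 'I_n -> R) (t : R) :
  \sum_(i in A) (if i \in A :&: B then (1 - t) * z i + t * w i else z i) =
  \sum_(i in A) z i + t * (\sum_(i in A :&: B) w i - \sum_(i in A :&: B) z i).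
Proof.
rewrite !(big_mkcond (fun i => i \in _)) -sumrB mulr_sumr -big_split /=.
apply: eq_bigr => i _; rewrite !inE.
case: (i \in A); case: (i \in B) => /=; rewrite ?subrr ?mulr0 ?addr0 //.
rewrite mulrBl mul1r mulrBr; lra.
Qed.

Lemma sumB_t (A B : {set 'I_n}) (z w : 'I_n -> R) (s : R) :
  \sum_(i in B) (if i \in A :&: B then (1 - (1 - s)) * z i + (1 - s) * w i else z i) =
  \sum_(i in B) z i + (1 - s) * (\sum_(i in A :&: B) w i - \sum_(i in A :&: B) z i).
Proof.
rewrite !(big_mkcond (fun i => i \in _)) -sumrB mulr_sumr -big_split /=.
apply: eq_bigr => i _; rewrite !inE.
case: (i \in A); case: (i \in B) => /=; rewrite ?subrr ?mulr0 ?addr0 //.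
rewrite !mulrBl !mul1r !mulrBr; lra.
Qed.

Lemma sumXY (A B : {set 'I_n}) (z : 'I_n -> R) :
  \sum_(i in A) z i + \sum_(i in B) z i =
  \sum_(i in A :|: B) z i + \sum_(i in A :&: B) z i.
Proof.
rewrite !(big_mkcond (fun i => i \in _)) -!big_split /=.
apply: eq_bigr => i _; rewrite !inE.
by case: (i \in A); case: (i \in B) => /=; rewrite ?addr0 ?add0r.
Qed.

Lemma sumX_le (A B : {set 'I_n}) (z : 'I_n -> R) : (forall i, i \in A :|: B -> 0 <= z i) ->
  \sum_(i in A) z i <= \sum_(i in A :|: B) z i /\
  \sum_(i in B) z i <= \sum_(i in A :|: B) z i.
Proof.
move=> hz; rewrite !(big_mkcond (fun i => i \in _)); split; apply: ler_sum => i _;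
  have := hz i; rewrite !inE;
  by case: (i \in A); case: (i \in B) => //= h; apply: h.
Qed.

Lemma exchange_feas (A B : {set 'I_n}) (z w : 'I_n -> R) :
  feas (A :|: B) z -> feas (A :&: B) w ->
  exists a b, [/\ feas A a, feas B b &
     valf (A :|: B) z + valf (A :&: B) w <= valf A a + valf B b].
Proof.
move=> fz fw; have [hz1 hz] := fz; have [hw1 hw] := fw.
have [X1 Y1] := sumX_le A B z hz.
have XY := sumXY A B z.
set X := \sum_(i in A) z i in X1 XY.
set Y := \sum_(i in B) z i in Y1 XY.
set Zu := \sum_(i in A :|: B) z i in hz1 X1 Y1 XY.
set Zi := \sum_(i in A :&: B) z i in XY.
set W := \sum_(i in A :&: B) w i in hw1.
suff [t /andP[t0 t1] [ha hb]] : exists2 t : R, 0 <= t <= 1 &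
    X + t * (W - Zi) <= 1 /\ Y + (1 - t) * (W - Zi) <= 1.
  have tt : 0 <= t <= 1 by apply/andP.
  eexists; eexists; split; last exact: (@exchange A B z w t tt fz fw).
  - split; first by rewrite sumA_t.
    move=> i iA; case: ifP => iAB.
      have [iA' iB'] : i \in A /\ i \in B by apply/setIP.
      have z0 := hz i ltac:(by rewrite inE iA').
      have w0 := hw i iAB.
      by apply: addr_ge0; apply: mulr_ge0 => //; lra.
    by apply: hz; rewrite inE iA.
  - split; first by rewrite sumB_t.
    move=> i iB; case: ifP => iAB.
      have [iA' iB'] : i \in A /\ i \in B by apply/setIP.
      have z0 := hz i ltac:(by rewrite inE iA').
      have w0 := hw i iAB.
      by apply: addr_ge0; apply: mulr_ge0 => //; lra.
    by apply: hz; rewrite inE iB orbT.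
have [D0|D0] := lerP (W - Zi) 0.
  exists 0; first by rewrite lexx ler01.
  by split; nra.
have [E1|E1] := lerP (X + (W - Zi)) 1.
  exists 1; first by rewrite ler01 lexx.
  by split; lra.
exists ((1 - X) / (W - Zi)).
  apply/andP; split.
    by apply: divr_ge0; lra.
  by rewrite ler_pdivrMr //; lra.
have e : (1 - X) / (W - Zi) * (W - Zi) = 1 - X.
  by rewrite divfK //; apply: lt0r_neq0.
split; first lra.
rewrite mulrBl mul1r e; lra.
Qed.
End F.


Section H.
Variables (R : realType) (n m : nat) (q rho xi : 'I_n -> 'I_m -> R).
Hypothesis hq : forall i j, 0 <= q i j.
Local Notation feas := (@feas R n).
Local Notation vl := (@valf R n m q rho xi).
Local Notation Bd := (@Bd R n m q xi).
Let gle := @gfun_le R n m q rho xi hq.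
Let gge := @gfun_ge0 R n m q rho xi hq.
Let exch := @exchange_feas R n m q rho xi hq.

Definition fset (A : {set 'I_n}) : set R :=
  [set v | exists z : 'I_n -> R,
        [/\ \sum_(i in A) z i <= 1,
            (forall i, i \in A -> 0 <= z i) &
            v = \sum_(i in A) gfun q rho xi i (z i)]].

Lemma ffunE S : ffun_set q rho xi S = sup (fset (withlast S)).
Proof. by []. Qed.

Lemma feas0 A : feas A (fun _ => 0).
Proof. by split => //; rewrite big1. Qed.

Lemma fset_sup A : has_sup (fset A).
Proof.
split; first by exists (vl A (fun _ => 0)), (fun _ => 0); split => //; rewrite big1.
exists (\sum_(i in A) Bd i) => v [z [_ hz ->]].
by apply: ler_sum => i iA; apply: gle => //; apply: hz.
Qed.

Lemma f_ge S z : feas (withlast S) z -> vl (withlast S) z <= ffun_set q rho xi S.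
Proof.
move=> [h1 h2]; rewrite ffunE.
move: (sup_upper_bound (fset_sup (withlast S))) => /ubP; apply.
by exists z.
Qed.

Lemma f_le S c : (forall z, feas (withlast S) z -> vl (withlast S) z <= c) ->
  ffun_set q rho xi S <= c.
Proof.
move=> H; rewrite ffunE; apply: ge_sup.
  by exists (vl (withlast S) (fun _ => 0)), (fun _ => 0); split => //; rewrite big1.
by move=> v [z [h1 h2 ->]]; apply: H.
Qed.

Lemma withlastU (S T : {set 'I_n}) : withlast (S :|: T) = withlast S :|: withlast T.
Proof.
apply/setP => i; rewrite /withlast !inE.
by case: (i \in S); case: (i \in T); case: (is_last i).
Qed.

Lemma withlastI (S T : {set 'I_n}) : withlast (S :&: T) = withlast S :&: withlast T.
Proof.
apply/setP => i; rewrite /withlast !inE.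
by case: (i \in S); case: (i \in T); case: (is_last i).
Qed.

Lemma f_nonneg (S : {set 'I_n}) : 0 <= ffun_set q rho xi S.
Proof.
apply: le_trans (f_ge S _ (feas0 (withlast S))).
by apply: sumr_ge0 => i _; apply: gge.
Qed.

Lemma f_mono (S T : {set 'I_n}) : S \subset T -> ffun_set q rho xi S <= ffun_set q rho xi T.
Proof.
move=> sST.
have sAB : withlast S \subset withlast T.
  apply/fintype.subsetP => i; rewrite /withlast !inE => /orP[h|->]; last by rewrite orbT.
  by rewrite (fintype.subsetP sST _ h).
apply: f_le => z [h1 h2].
set z' := fun i => if i \in withlast S then z i else 0.
have f' : feas (withlast T) z'.
  split.
    rewrite (_ : \sum_(i in withlast T) z' i = \sum_(i in withlast S) z i) //.
    rewrite !(big_mkcond (fun i => i \in _)); apply: eq_bigr => i _ /=.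
    rewrite /z'; have [iA|iA] := boolP (i \in withlast S).
      by rewrite (fintype.subsetP sAB _ iA).
    by case: ifP.
  by move=> i _; rewrite /z'; case: ifP => // iA; apply: h2.
apply: le_trans (f_ge T _ f').
rewrite /valf !(big_mkcond (fun i => i \in _)); apply: ler_sum => i _ /=.
rewrite /z'; have [iA|iA] := boolP (i \in withlast S).
  by rewrite (fintype.subsetP sAB _ iA).
by case: ifP => _ //; apply: gge; exact: lexx.
Qed.

Lemma f_submod (S T : {set 'I_n}) :
  ffun_set q rho xi (S :|: T) + ffun_set q rho xi (S :&: T) <=
  ffun_set q rho xi S + ffun_set q rho xi T.
Proof.
rewrite !(ffunE (_ :|: _)) !(ffunE (_ :&: _)).
rewrite -[sup (fset (withlast (S :|: T)))]mul1r -[sup (fset (withlast (S :&: T)))]mul1r.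
apply: sup2_le; rewrite ?ler01 //; try exact: fset_sup.
move=> v1 v2 [z [z1 z2 ->]] [w [w1 w2 ->]]; rewrite !mul1r.
rewrite withlastU in z1 z2 *; rewrite withlastI in w1 w2 *.
have [a [b [fa fb H]]] := exch _ _ _ _ (conj z1 z2) (conj w1 w2).
apply: le_trans H _.
by apply: lerD; apply: f_ge.
Qed.
End H.

Theorem lemma4p3 (R : realType) (n m : nat) (q rho xi : 'I_n -> 'I_m -> R) :
  (0 < n)%N ->
  (forall i j, 0 <= q i j) ->
  (forall i, \sum_(j < m) q i j = 1) ->
  let f := ffun_set q rho xi in
  (forall S, in_dom S -> 0 <= f S) /\
  (forall S T, in_dom S -> in_dom T -> S \subset T -> f S <= f T) /\
  (forall S T, in_dom S -> in_dom T -> f (S :|: T) + f (S :&: T) <= f S + f T).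
Proof.
move=> _ hq _ f; split; first by move=> S _; exact: f_nonneg.
split; first by move=> S T _ _; exact: f_mono.
by move=> S T _ _; exact: f_submod.
Qed.
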